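(* Let $\Phi:I\to O$ be a linear map. Then $\Phi$ is completely positive if and only if $C_\Phi\in\mathcal{L}(\mathcal{M}_\Phi)$ is a positive operator on the Hilbert $O^{op}$-module $\mathcal{M}_\Phi$, i.e. $\langle \xi, C_\Phi(\xi)\rangle_{O^{op}}\ge 0$ for all $\xi\in\mathcal{M}_\Phi$.
   Context: All Hilbert spaces are finite dimensional and inner products are linear in the second variable. Let $H_{in}=\bigoplus_a H^a_{in}$ and $H_{out}=\bigoplus_b H^b_{out}$ be finite direct sums of finite-dimensional Hilbert spaces, and $I=\bigoplus_a B(H^a_{in})\subseteq B(H_{in})$, $O=\bigoplus_b B(H^b_{out})\subseteq B(H_{out})$. Let $\{e^a_i\}_i$ be an orthonormal basis of $H^a_{in}$ and $e^a_{ij}=\theta_{e^a_i,e^a_j}$ the corresponding matrix units of $B(H^a_{in})$, where $\theta_{\xi,\eta}(\eta')=\langle\eta,\eta'\rangle\xi$. $O^{op}$ denotes the opposite algebra of $O$: same vector space and involution, with product $a*b=ba$; it is a C*-algebra. A (right) Hilbert $A$-module over a C*-algebra $A$ is a right $A$-module with an $A$-valued inner product $\langle\cdot,\cdot\rangle_A$ (positive definite, $\langle x,y\rangle_A=\langle y,x\rangle_A^*$, $A$-linear in the second variable), complete for $\|x\|=\|\langle x,x\rangle_A\|^{1/2}$; $\mathcal{L}(\mathcal{M})$ denotes the adjointable $A$-linear operators. Let $\mathcal{M}_\Phi=H_{in}\otimes O^{op}$, the right Hilbert $O^{op}$-module with right action $(\xi\otimes a)*x=\xi\otimes(a*x)$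 and inner product $\langle\xi\otimes a,\eta\otimes b\rangle_{O^{op}}=\langle\xi,\eta\rangle\, a^* * b$. For a linear map $\Phi:I\to O$, $C_\Phi\in\mathcal{L}(\mathcal{M}_\Phi)$ is the $O^{op}$-linear operator determined by $C_\Phi(e^a_j\otimes 1)=\sum_i e^a_i\otimes\Phi(e^a_{ji})$, where $\Phi(e^a_{ji})$ is regarded as an element of $O^{op}$ (equivalently, under $\mathcal{L}(\mathcal{M}_\Phi)\cong B(H_{in})\otimes O^{op}$, $C_\Phi=\sum_{i,j,a}e^a_{ij}\otimes\Phi(e^a_{ji})$). *)

(* Defs.v *)
(* Finite-dimensional C*-algebras I = (+)_a B(H^a_in),
   O = (+)_b B(H^b_out) over a field of "complex numbers" C
   (any numClosedFieldType, e.g. complex numbers R[i] over a real closed R). *)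
From mathcomp Require Import all_boot all_order all_algebra.
Set Implicit Arguments. Unset Strict Implicit. Unset Printing Implicit Defensive.
Import Order.TTheory GRing.Theory Num.Theory.
Local Open Scope ring_scope.

Section Defs.
Variable C : numClosedFieldType.

Definition mxadj (r s : nat) (A : 'M[C]_(r, s)) : 'M[C]_(s, r) :=
  (map_mx (fun z : C => z^*) A)^T.

(* Input blocks: p blocks, H^a_in = C^(n a); Output blocks: q blocks, H^b_out = C^(m b).
   An element of I = (+)_a B(H^a_in) is a family of matrices, one per block. *)
Definition Ialg (p : nat) (n : 'I_p -> nat) := forall a : 'I_p, 'M[C]_(n a).
Definition Oalg (q : nat) (m : 'I_q -> nat) := forall b : 'I_q, 'M[C]_(m b).

Definition is_linear_map p (n : 'I_p -> nat) q (m : 'I_q -> nat)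
  (Phi : Ialg n -> Oalg m) : Prop :=
  forall (c : C) (x y : Ialg n) (b : 'I_q),
    Phi (fun a => c *: x a + y a) b = c *: Phi x b + Phi y b.

Definition posO q (m : 'I_q -> nat) (x : Oalg m) : Prop :=
  forall v : forall b : 'I_q, 'cV[C]_(m b),
    0 <= \sum_(b < q) (mxadj (v b) *m x b *m v b) 0 0.

Definition posMkI p (n : 'I_p -> nat) (k : nat) (X : 'I_k -> 'I_k -> Ialg n) : Prop :=
  forall v : 'I_k -> forall a : 'I_p, 'cV[C]_(n a),
    0 <= \sum_(i < k) \sum_(j < k) \sum_(a < p)
            (mxadj (v i a) *m X i j a *m v j a) 0 0.

Definition posMkO q (m : 'I_q -> nat) (k : nat) (Y : 'I_k -> 'I_k -> Oalg m) : Prop :=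
  forall v : 'I_k -> forall b : 'I_q, 'cV[C]_(m b),
    0 <= \sum_(i < k) \sum_(j < k) \sum_(b < q)
            (mxadj (v i b) *m Y i j b *m v j b) 0 0.

Definition completely_positive p (n : 'I_p -> nat) q (m : 'I_q -> nat)
  (Phi : Ialg n -> Oalg m) : Prop :=
  forall (k : nat) (X : 'I_k -> 'I_k -> Ialg n),
    posMkI X -> posMkO (fun i j => Phi (X i j)).

(* Matrix unit e^a_{ij} = theta_{e^a_i, e^a_j} of B(H^a_in), viewed in I
   (it sends e^a_j to e^a_i, zero on other blocks). *)
Definition munit p (n : 'I_p -> nat) (a : 'I_p) (i j : 'I_(n a)) : Ialg n :=
  fun a' => \matrix_(r, s) ((a' == a) && (r == i :> nat) && (s == j :> nat))%:R.

(* O^op: same underlying elements and involution, product x * y := y x. *)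
Definition opmul q (m : 'I_q -> nat) (x y : Oalg m) : Oalg m :=
  fun b => y b *m x b.
Definition opstar q (m : 'I_q -> nat) (x : Oalg m) : Oalg m :=
  fun b => mxadj (x b).
Definition opadd q (m : 'I_q -> nat) (x y : Oalg m) : Oalg m :=
  fun b => x b + y b.
Definition opzero q (m : 'I_q -> nat) : Oalg m := fun b => 0.

(* The Hilbert O^op-module M_Phi = H_in (x) O^op: an element
   xi = sum_{a,i} e^a_i (x) xi a i  is given by its coefficients. *)
Definition Mmod p (n : 'I_p -> nat) q (m : 'I_q -> nat) :=
  forall a : 'I_p, 'I_(n a) -> Oalg m.

Definition ipOp p (n : 'I_p -> nat) q (m : 'I_q -> nat)
  (xi eta : Mmod n m) : Oalg m :=
  \big[@opadd q m / opzero m]_(a < p) \big[@opadd q m / opzero m]_(i < n a)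
     opmul (opstar (xi a i)) (eta a i).

(* C_Phi, the O^op-linear operator with C_Phi(e^a_j (x) 1) = sum_i e^a_i (x) Phi(e^a_{ji});
   by O^op-linearity C_Phi(sum_j e^a_j (x) x_j) = sum_i e^a_i (x) sum_j Phi(e^a_{ji}) * x_j. *)
Definition CPhi p (n : 'I_p -> nat) q (m : 'I_q -> nat)
  (Phi : Ialg n -> Oalg m) (xi : Mmod n m) : Mmod n m :=
  fun a i => \big[@opadd q m / opzero m]_(j < n a) opmul (Phi (munit j i)) (xi a j).

(* O^op has the same underlying set and involution as O,
   and its positive elements a^* * a (= a a^* in O) are exactly the positive
   elements of O; we use the operator description of positivity in O. *)
Definition posOop q (m : 'I_q -> nat) (x : Oalg m) : Prop := posO x.

Definition positive_module_op p (n : 'I_p -> nat) q (m : 'I_q -> nat)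
  (T : Mmod n m -> Mmod n m) : Prop :=
  forall xi : Mmod n m, posOop (ipOp xi (T xi)).

End Defs.

(* Main.v *)
Require Import Defs.
From mathcomp Require Import all_boot all_order all_algebra.
From mathcomp Require Import ring.
From Stdlib Require Import FunctionalExtensionality.
Set Implicit Arguments. Unset Strict Implicit. Unset Printing Implicit Defensive.
Import Order.TTheory GRing.Theory Num.Theory.
Local Open Scope ring_scope.


Section Gen.
Variable C : numClosedFieldType.

Lemma quadE r (u : 'cV[C]_r) (M : 'M[C]_r) (w : 'cV[C]_r) :
  (mxadj u *m M *m w) 0 0 = \sum_i \sum_j (u i 0)^* * M i j * w j 0.
Proof.
rewrite !mxE /mxadj; under eq_bigr => j _ do rewrite !mxE big_distrl /=.
rewrite exchange_big /=; apply: eq_bigr => i _; apply: eq_bigr => j _.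
by rewrite !mxE.
Qed.

Lemma mxadj_sum r s (I : finType) (c : I -> C) (u : I -> 'M[C]_(r,s)) :
  mxadj (\sum_i c i *: u i) = \sum_i (c i)^* *: mxadj (u i).
Proof.
apply/matrixP => a b; rewrite /mxadj !mxE summxE rmorph_sum /=.
rewrite summxE; apply: eq_bigr => i _; rewrite !mxE rmorphM.
by [].
Qed.

Lemma qsum r (I J : finType) (c : I -> C) (d : J -> C) (u : I -> 'cV[C]_r)
  (w : J -> 'cV[C]_r) (M : 'M[C]_r) :
  (mxadj (\sum_i c i *: u i) *m M *m (\sum_j d j *: w j)) 0 0 =
  \sum_i \sum_j (c i)^* * d j * (mxadj (u i) *m M *m w j) 0 0.
Proof.
rewrite mxadj_sum mulmx_suml mulmx_suml summxE.
apply: eq_bigr => i _; rewrite mulmx_sumr summxE.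
apply: eq_bigr => j _.
by rewrite -!scalemxAl -scalemxAr !mxE mulrA.
Qed.

End Gen.


Section Gen2.
Variable C : numClosedFieldType.

Lemma mxadj_delta N (i : 'I_N) : mxadj (delta_mx i 0 : 'cV[C]_N) = delta_mx 0 i.
Proof.
apply/matrixP => a b; rewrite /mxadj !mxE.
by case: (b == i); case: (a == 0); rewrite /= ?conjC0 ?conjC1.
Qed.

Lemma qdelta N (A : 'M[C]_N) (i j : 'I_N) :
  (mxadj (delta_mx i 0 : 'cV[C]_N) *m A *m (delta_mx j 0 : 'cV[C]_N)) 0 0 = A i j.
Proof. by rewrite mxadj_delta -rowE -colE !mxE. Qed.

Lemma q2 N (A : 'M[C]_N) (i j : 'I_N) (al be : C) :
  (mxadj (al *: delta_mx i 0 + be *: delta_mx j 0 : 'cV[C]_N) *m A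
     *m (al *: delta_mx i 0 + be *: delta_mx j 0 : 'cV[C]_N)) 0 0 =
  al^* * al * A i i + al^* * be * A i j + be^* * al * A j i + be^* * be * A j j.
Proof.
have -> : al *: delta_mx i 0 + be *: delta_mx j 0 =
   \sum_(k : bool) (if k then al else be) *: (if k then delta_mx i 0 else delta_mx j 0 : 'cV[C]_N).
  by rewrite big_bool.
by rewrite qsum !big_bool /= !qdelta addrA.
Qed.

Lemma psd_herm N (A : 'M[C]_N) :
  (forall u : 'cV_N, 0 <= (mxadj u *m A *m u) 0 0) -> forall i j, A j i = (A i j)^*.
Proof.
move=> hA i j.
have hr al be : (al^* * al * A i i + al^* * be * A i j + be^* * al * A j i
   + be^* * be * A j j) \is Num.real by rewrite -q2; apply: ger0_real.
have rii : A i i \is Num.real.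
  by have := hr 1 0; rewrite conjC1 conjC0 ?mul1r ?mul0r ?mulr0 ?addr0 ?add0r.
have rjj : A j j \is Num.real.
  by have := hr 0 1; rewrite conjC1 conjC0 ?mul1r ?mul0r ?mulr0 ?addr0 ?add0r.
have r1 : A i j + A j i \is Num.real.
  have h := hr 1 1.
  have -> : A i j + A j i = (1^* * 1 * A i i + 1^* * 1 * A i j + 1^* * 1 * A j i
   + 1^* * 1 * A j j) - A i i - A j j by rewrite conjC1; ring.
  by rewrite !rpredB.
have r2 : 'i * (A i j - A j i) \is Num.real.
  have h := hr 1 'i.
  have e : 1^* * 1 * A i i + 1^* * 'i * A i j + 'i^* * 1 * A j i + 'i^* * 'i * A j j
    = A i i + 'i * (A i j - A j i) + (- ('i ^+ 2)) * A j j
    by rewrite conjC1 conjCi; ring.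
  rewrite sqrCi opprK mul1r in e.
  have -> : 'i * (A i j - A j i) = (1^* * 1 * A i i + 1^* * 'i * A i j + 'i^* * 1 * A j i
    + 'i^* * 'i * A j j) - A i i - A j j by rewrite e; ring.
  by rewrite !rpredB.
move: r1 r2; rewrite !CrealE => /eqP e1 /eqP e2.
move: e1 e2; rewrite rmorphM rmorphB rmorphD /= => e1 e2.
have ci := conjCi C.
have e2' : (- 'i) * ((A i j)^* - (A j i)^*) = 'i * (A i j - A j i).
  by rewrite -ci.
have e3 : (A i j)^* - (A j i)^* = A j i - A i j.
  have := congr1 (fun x => 'i * x) e2'; rewrite /= !mulrA mulrN -expr2 sqrCi opprK mul1r mulN1r => ->.
  by rewrite opprB.
have : ((A i j)^* - A j i) *+ 2 == 0.
  apply/eqP; rewrite mulr2n.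
  have -> : (A i j)^* - A j i + ((A i j)^* - A j i) =
    ((A i j)^* + (A j i)^* - (A i j + A j i)) + ((A i j)^* - (A j i)^* - (A j i - A i j))
    by ring.
  by rewrite e1 e3 !subrr addr0.
by rewrite mulrn_eq0 /= subr_eq0 => /eqP.
Qed.
End Gen2.


Section Gen3.
Variable C : numClosedFieldType.
Local Open Scope sesquilinear_scope.

Lemma psd_decomp_mx N (A : 'M[C]_N) :
  (forall u : 'cV_N, 0 <= (mxadj u *m A *m u) 0 0) ->
  {x : 'I_N -> 'I_N -> C | forall i j, A i j = \sum_l x l i * (x l j)^*}.
Proof.
move=> hA.
have hh := psd_herm hA.
have Aherm : A \is hermsymmx.
  apply/is_hermitianmxP; rewrite expr0 scale1r; apply/matrixP => i j.
  by rewrite !mxE hh.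
have /orthomx_spectralP Aeq := hermitian_normalmx Aherm.
set P := spectralmx A in Aeq; set d := spectral_diag A in Aeq.
have Pu : P \is unitarymx by apply: spectral_unitarymx.
rewrite invmx_unitary // in Aeq.
have PP : P *m P ^t* = 1%:M by apply/unitarymxP.
have dge0 : forall l, 0 <= d 0 l.
  move=> l; have := hA (col l (P ^t*)).
  have -> : mxadj (col l (P ^t*)) = row l P.
    by apply/matrixP => a b; rewrite /mxadj !mxE conjCK.
  have -> : (row l P *m A *m col l (P ^t*)) 0 0 = (P *m A *m P ^t*) l l.
    by rewrite -row_mul !mxE; apply: eq_bigr => k _; rewrite !mxE.
  rewrite Aeq !mulmxA PP mul1mx -[_ *m P *m _]mulmxA PP mulmx1.
  by rewrite !mxE eqxx mulr1n.
exists (fun l i => sqrtC (d 0 l) * (P l i)^*) => i j.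
rewrite Aeq mul_mx_diag !mxE; apply: eq_bigr => l _.
rewrite !mxE rmorphM /= conjCK.
have hs : (sqrtC (d 0 l))^* = sqrtC (d 0 l).
  by apply: conj_Creal; apply: ger0_real; rewrite sqrtC_ge0.
rewrite hs.
have hd : d 0 l = sqrtC (d 0 l) * sqrtC (d 0 l) by rewrite -expr2 sqrtCK.
set s := sqrtC (d 0 l) in hd *.
rewrite hd; ring.
Qed.

End Gen3.

Section Gen4.
Variable C : numClosedFieldType.

Lemma sum_enum_val (T : finType) (F : T -> C) :
  \sum_t F t = \sum_(i < #|T|) F (enum_val i).
Proof. by rewrite (reindex _ (onW_bij _ (enum_val_bij T))). Qed.

Lemma psd_decomp (T : finType) (K : T -> T -> C) :
  (forall u : T -> C, 0 <= \sum_t \sum_t' (u t)^* * K t t' * u t') ->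
  {x : 'I_#|T| -> T -> C | forall t t', K t t' = \sum_l x l t * (x l t')^*}.
Proof.
move=> hK.
pose A := \matrix_(i, j) K (enum_val i) (enum_val j) : 'M[C]_#|T|.
have hA : forall u : 'cV_#|T|, 0 <= (mxadj u *m A *m u) 0 0.
  move=> u; rewrite quadE.
  have := hK (fun t => u (enum_rank t) 0).
  rewrite sum_enum_val.
  under eq_bigr => i _ do rewrite sum_enum_val.
  under eq_bigr => i _ do under eq_bigr => j _ do rewrite !enum_valK.
  move=> h; by under eq_bigr => i _ do under eq_bigr => j _ do rewrite mxE.
have [x hx] := psd_decomp_mx hA.
exists (fun l t => x l (enum_rank t)) => t t'.
by rewrite -hx mxE !enum_rankK.
Qed.

End Gen4.


Section Lift.
Variable C : numClosedFieldType.
Variables (I : eqType) (N : I -> nat).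

Definition rei (V : zmodType) (a0 a : I) (i : 'I_(N a)) (g : 'I_(N a0) -> V) : V :=
  if a == a0 then (match insub (val i) with Some i' => g i' | None => 0 end) else 0.

Lemma rei_eq (V : zmodType) a0 (i : 'I_(N a0)) (g : 'I_(N a0) -> V) : rei i g = g i.
Proof. by rewrite /rei eqxx valK. Qed.

Lemma rei_ne (V : zmodType) a0 a (i : 'I_(N a)) (g : 'I_(N a0) -> V) :
  a != a0 -> rei i g = 0.
Proof. by rewrite /rei => /negbTE ->. Qed.

Definition liftv a0 (u : 'cV[C]_(N a0)) : forall a, 'cV[C]_(N a) :=
  fun a => \col_t rei t (fun t' => u t' 0).

Lemma liftv_eq a0 (u : 'cV[C]_(N a0)) : liftv u a0 = u.
Proof. by apply/matrixP => i j; rewrite !mxE rei_eq ord1. Qed.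

Lemma liftv_ne a0 (u : 'cV[C]_(N a0)) a : a != a0 -> liftv u a = 0.
Proof. by move=> h; apply/matrixP => i j; rewrite !mxE rei_ne. Qed.

End Lift.

Section Basic.
Variable C : numClosedFieldType.

Lemma mxadj_mul r s t (A : 'M[C]_(r, s)) (B : 'M[C]_(s, t)) :
  mxadj (A *m B) = mxadj B *m mxadj A.
Proof. by rewrite /mxadj map_mxM trmx_mul. Qed.

Lemma mxadjK r s (A : 'M[C]_(r, s)) : mxadj (mxadj A) = A.
Proof. by apply/matrixP => i j; rewrite /mxadj !mxE conjCK. Qed.

Lemma mxadj0 r s : mxadj (0 : 'M[C]_(r, s)) = 0.
Proof. by apply/matrixP => i j; rewrite /mxadj !mxE conjC0. Qed.

Lemma q0l r (M : 'M[C]_r) (w : 'cV[C]_r) : (mxadj (0 : 'cV[C]_r) *m M *m w) 0 0 = 0.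
Proof. by rewrite mxadj0 !mul0mx mxE. Qed.

Lemma q_sumM r (u w : 'cV[C]_r) (J : Type) (s : seq J) (P : pred J) (M : J -> 'M[C]_r) :
  (mxadj u *m (\sum_(k <- s | P k) M k) *m w) 0 0 =
  \sum_(k <- s | P k) (mxadj u *m M k *m w) 0 0.
Proof. by rewrite mulmx_sumr mulmx_suml summxE. Qed.

Lemma q_scaleM r (u w : 'cV[C]_r) c (M : 'M[C]_r) :
  (mxadj u *m (c *: M) *m w) 0 0 = c * (mxadj u *m M *m w) 0 0.
Proof. by rewrite -scalemxAr -scalemxAl mxE. Qed.

Definition e0 r : 'cV[C]_r := \col_t (t == 0 :> nat)%:R.

Lemma e0K r (u : 'cV[C]_r) : mxadj (e0 r *m mxadj u) *m e0 r = u.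
Proof.
rewrite mxadj_mul mxadjK -mulmxA.
case: r u => [|r] u; first by rewrite [u]flatmx0 [LHS]flatmx0.
have -> : mxadj (e0 r.+1) *m e0 r.+1 = 1%:M.
  apply/matrixP => i j; rewrite !ord1 !mxE (bigD1 0) //= big1 ?addr0.
    by rewrite /mxadj !mxE /= conjC1 mulr1.
  move=> k hk; rewrite /mxadj !mxE.
  have -> : (k == 0 :> nat) = false by apply/negbTE.
  by rewrite conjC0 mul0r.
by rewrite mulmx1.
Qed.

Lemma sum_pair (I J : finType) (F : I * J -> C) :
  \sum_p F p = \sum_i \sum_j F (i, j).
Proof. by rewrite pair_bigA; apply: eq_bigr => -[i j]. Qed.

End Basic.


Section Main.
Variables (C : numClosedFieldType) (p : nat) (n : 'I_p -> nat) (q : nat) (m : 'I_q -> nat).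
Variable Phi : Ialg C n -> Oalg C m.
Hypothesis hlin : is_linear_map Phi.

Lemma bigO_eval (J : Type) (r : seq J) (P : pred J) (F : J -> Oalg C m) b :
  (\big[@opadd C q m / opzero C m]_(i <- r | P i) F i) b = \sum_(i <- r | P i) F i b.
Proof. by apply: (big_morph (fun x : Oalg C m => x b) (id1 := 0) (op1 := +%R)). Qed.

Lemma Phi0 b : Phi (fun a => 0) b = 0.
Proof.
have := hlin 1 (fun a => 0) (fun a => 0) b.
have -> : (fun a => 1 *: (0 : 'M[C]_(n a)) + 0) = (fun a => 0).
  by apply: functional_extensionality_dep => a; rewrite scale1r addr0.
rewrite scale1r => h.
by apply: (addrI (Phi (fun a => 0) b)); rewrite addr0 -h.
Qed.

Lemma PhiD (x y : Ialg C n) b : Phi (fun a => x a + y a) b = Phi x b + Phi y b.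
Proof.
have := hlin 1 x y b.
have -> : (fun a => 1 *: x a + y a) = (fun a => x a + y a).
  by apply: functional_extensionality_dep => a; rewrite scale1r.
by rewrite scale1r.
Qed.

Lemma PhiZ c (x : Ialg C n) b : Phi (fun a => c *: x a) b = c *: Phi x b.
Proof.
have := hlin c x (fun a => 0) b.
have -> : (fun a => c *: x a + 0) = (fun a => c *: x a).
  by apply: functional_extensionality_dep => a; rewrite addr0.
by rewrite Phi0 addr0.
Qed.

Lemma Phi_sum (J : Type) (r : seq J) (P : pred J) (F : J -> Ialg C n) b :
  Phi (fun a => \sum_(i <- r | P i) F i a) b = \sum_(i <- r | P i) Phi (F i) b.
Proof.
elim: r => [|x r IH].
  have -> : (fun a => \sum_(i <- [::] | P i) F i a) = (fun a => 0).
    by apply: functional_extensionality_dep => a; rewrite big_nil.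
  by rewrite big_nil Phi0.
rewrite big_cons.
have -> : (fun a => \sum_(i <- x :: r | P i) F i a) =
          (fun a => if P x then F x a + \sum_(i <- r | P i) F i a
                    else \sum_(i <- r | P i) F i a).
  by apply: functional_extensionality_dep => a; rewrite big_cons.
case: (P x) => //.
by rewrite (PhiD (F x) (fun a => \sum_(i <- r | P i) F i a)) IH.
Qed.

Lemma Ialg_expand (x : Ialg C n) :
  x = (fun a => \sum_(a' < p) \sum_(r < n a') \sum_(s < n a') x a' r s *: munit C r s a).
Proof.
apply: functional_extensionality_dep => a; apply/matrixP => i j.
rewrite summxE (bigD1 a) //= [X in _ = _ + X]big1 ?addr0.
  rewrite summxE (bigD1 i) //= [X in _ = _ + X]big1 ?addr0.
    rewrite summxE (bigD1 j) //= [X in _ = _ + X]big1 ?addr0.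
      by rewrite !mxE !eqxx mulr1.
    move=> s hs; rewrite !mxE eqxx /=.
    have -> : (j == s :> nat) = false by apply/negbTE; rewrite eq_sym.
    by rewrite andbF mulr0.
  move=> r hr; rewrite summxE big1 // => s _; rewrite !mxE eqxx /=.
  have -> : (i == r :> nat) = false by apply/negbTE; rewrite eq_sym.
  by rewrite mulr0.
move=> a' ha; rewrite summxE big1 // => r _; rewrite summxE big1 // => s _.
rewrite !mxE.
have -> : (a == a') = false by apply/negbTE; rewrite eq_sym.
by rewrite mulr0.
Qed.

Lemma Phi_expand (x : Ialg C n) b :
  Phi x b = \sum_(a' < p) \sum_(r < n a') \sum_(s < n a') x a' r s *: Phi (munit C r s) b.
Proof.
rewrite {1}(Ialg_expand x) Phi_sum; apply: eq_bigr => a' _.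
rewrite (Phi_sum _ _ (fun r a => \sum_(s < n a') x a' r s *: munit C r s a)); apply: eq_bigr => r _.
rewrite (Phi_sum _ _ (fun s a => x a' r s *: munit C r s a)); apply: eq_bigr => s _.
by rewrite PhiZ.
Qed.

Lemma ipCPhi (xi : Mmod C n m) b :
  ipOp xi (CPhi Phi xi) b =
  \sum_(a < p) \sum_(i < n a) \sum_(j < n a)
      xi a j b *m Phi (munit C j i) b *m mxadj (xi a i b).
Proof.
rewrite /ipOp bigO_eval; apply: eq_bigr => a _.
rewrite bigO_eval; apply: eq_bigr => i _.
rewrite /opmul /opstar /CPhi bigO_eval mulmx_suml; apply: eq_bigr => j _.
by rewrite /opmul.
Qed.

Lemma MOD_expand (xi : Mmod C n m) (v : forall b, 'cV[C]_(m b)) b :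
  (mxadj (v b) *m ipOp xi (CPhi Phi xi) b *m v b) 0 0 =
  \sum_(a < p) \sum_(i < n a) \sum_(j < n a)
    (mxadj (mxadj (xi a j b) *m v b) *m Phi (munit C j i) b
       *m (mxadj (xi a i b) *m v b)) 0 0.
Proof.
rewrite ipCPhi q_sumM; apply: eq_bigr => a _.
rewrite q_sumM; apply: eq_bigr => i _.
rewrite q_sumM; apply: eq_bigr => j _.
by rewrite mxadj_mul mxadjK !mulmxA.
Qed.

Lemma q_munit a (i j : 'I_(n a)) (u w : forall a', 'cV[C]_(n a')) :
  \sum_(a' < p) (mxadj (u a') *m munit C i j a' *m w a') 0 0 = (u a i 0)^* * w a j 0.
Proof.
rewrite (bigD1 a) //= [X in _ + X = _]big1 ?addr0.
  rewrite quadE (bigD1 i) //= [X in _ + X = _]big1 ?addr0.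
    rewrite (bigD1 j) //= [X in _ + X = _]big1 ?addr0.
      by rewrite !mxE !eqxx mulr1.
    move=> s hs; rewrite !mxE eqxx /=.
    have -> : (s == j :> nat) = false by apply/negbTE.
    by rewrite andbF mulr0 mul0r.
  move=> r hr; rewrite big1 // => s _; rewrite !mxE eqxx /=.
  have -> : (r == i :> nat) = false by apply/negbTE.
  by rewrite mulr0 mul0r.
move=> a' ha; rewrite quadE big1 // => r _; rewrite big1 // => s _.
by rewrite !mxE (negbTE ha) mulr0 mul0r.
Qed.

Lemma posMkI_munit a : posMkI (fun i j : 'I_(n a) => munit C i j).
Proof.
move=> v.
under eq_bigr => i _ do under eq_bigr => j _ do rewrite q_munit.
rewrite -big_distrlr /= -rmorph_sum mulrC.
exact: mul_conjC_ge0.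
Qed.

Lemma CP_MOD : completely_positive Phi -> positive_module_op (CPhi Phi).
Proof.
move=> hcp xi v.
under eq_bigr => b _ do rewrite MOD_expand.
rewrite exchange_big /=.
apply: sumr_ge0 => a _.
have := hcp (n a) (fun i j => munit C i j) (@posMkI_munit a)
   (fun i b => mxadj (xi a i b) *m v b).
move=> h.
rewrite exchange_big /=.
under eq_bigr => i _ do rewrite exchange_big /=.
rewrite exchange_big /=.
exact: h.
Qed.

Lemma choi (hmod : positive_module_op (CPhi Phi)) a0 b0
    (w : 'I_(n a0) -> 'cV[C]_(m b0)) :
  0 <= \sum_(i < n a0) \sum_(j < n a0) (mxadj (w j) *m Phi (munit C j i) b0 *m w i) 0 0.
Proof.
pose W a (i : 'I_(n a)) b : 'cV[C]_(m b) := @liftv C _ m b0 (@rei _ n _ a0 a i w) b.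
pose xi : Mmod C n m := fun a i b => e0 C (m b) *m mxadj (W a i b).
apply: le_trans (hmod xi (fun b => e0 C (m b))) _.
rewrite le_eqVlt; apply/orP; left; apply/eqP.
under eq_bigr => b _ do rewrite (MOD_expand xi (fun b => e0 C (m b))).
rewrite /xi.
under eq_bigr => b _ do under eq_bigr => a _ do under eq_bigr => i _ do
  under eq_bigr => j _ do rewrite !e0K.
rewrite (bigD1 b0) //= [X in _ + X]big1 ?addr0; last first.
  move=> b hb; apply: big1 => a _; apply: big1 => i _; apply: big1 => j _.
  by rewrite /W liftv_ne // q0l.
under eq_bigr => a _ do under eq_bigr => i _ do under eq_bigr => j _ do rewrite /W !liftv_eq.
rewrite (bigD1 a0) //= [X in _ + X]big1 ?addr0; last first.
  move=> a ha; apply: big1 => i _; apply: big1 => j _.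
  by rewrite rei_ne // q0l.
by under eq_bigr => i _ do under eq_bigr => j _ do rewrite !rei_eq.
Qed.

Lemma MOD_CP (hmod : positive_module_op (CPhi Phi)) : completely_positive Phi.
Proof.
move=> k X hX v.
have hK : forall a (u : 'I_k * 'I_(n a) -> C),
    0 <= \sum_t \sum_t' (u t)^* * X t.1 t'.1 a t.2 t'.2 * u t'.
  move=> a u.
  apply: le_trans (hX (fun i => @liftv C _ n a (\col_r u (i, r)))) _.
  rewrite le_eqVlt; apply/orP; left; apply/eqP.
  have E : forall i j, \sum_(a' < p) (mxadj (@liftv C _ n a (\col_r u (i, r)) a') *m
            X i j a' *m @liftv C _ n a (\col_r u (j, r)) a') 0 0 =
       (mxadj (\col_r u (i, r)) *m X i j a *m \col_r u (j, r)) 0 0.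
    move=> i j; rewrite (bigD1 a) //= [X in _ + X]big1 ?addr0 ?liftv_eq //.
    by move=> a' ha'; rewrite liftv_ne // q0l.
  under eq_bigr => i _ do under eq_bigr => j _ do rewrite E.
  rewrite sum_pair.
  under [RHS]eq_bigr => i _ do under eq_bigr => r _ do rewrite sum_pair.
  apply: eq_bigr => i _.
  under eq_bigr => j _ do rewrite quadE.
  rewrite exchange_big /=.
  apply: eq_bigr => r _; apply: eq_bigr => j _; apply: eq_bigr => s _.
  by rewrite !mxE.
pose x a := sval (psd_decomp (K := fun t t' => X t.1 t'.1 a t.2 t'.2) (hK a)).
have hx : forall a i j r s, X i j a r s = \sum_l x a l (i, r) * (x a l (j, s))^*.
  by move=> a i j r s; exact: (svalP (psd_decomp (K := fun t t' => X t.1 t'.1 a t.2 t'.2) (hK a)) (i, r) (j, s)).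
under eq_bigr => i _ do under eq_bigr => j _ do under eq_bigr => b _ do
  rewrite Phi_expand q_sumM.
under eq_bigr => i _ do under eq_bigr => j _ do under eq_bigr => b _ do
  under eq_bigr => a _ do rewrite q_sumM.
under eq_bigr => i _ do under eq_bigr => j _ do under eq_bigr => b _ do
  under eq_bigr => a _ do under eq_bigr => r _ do rewrite q_sumM.
under eq_bigr => i _ do under eq_bigr => j _ do under eq_bigr => b _ do
  under eq_bigr => a _ do under eq_bigr => r _ do
  under eq_bigr => s _ do rewrite q_scaleM hx big_distrl.
under eq_bigr => i _ do rewrite exchange_big /=.
rewrite exchange_big /=.
under eq_bigr => b _ do under eq_bigr => i _ do rewrite exchange_big /=.
under eq_bigr => b _ do rewrite exchange_big /=.
under eq_bigr => b _ do under eq_bigr => a _ do under eq_bigr => i _ do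
  under eq_bigr => j _ do under eq_bigr => r _ do rewrite exchange_big /=.
under eq_bigr => b _ do under eq_bigr => a _ do under eq_bigr => i _ do
  under eq_bigr => j _ do rewrite exchange_big /=.
under eq_bigr => b _ do under eq_bigr => a _ do under eq_bigr => i _ do
  rewrite exchange_big /=.
under eq_bigr => b _ do under eq_bigr => a _ do rewrite exchange_big /=.
under eq_bigr => b _ do under eq_bigr => a _ do under eq_bigr => l _ do
  under eq_bigr => i _ do under eq_bigr => j _ do rewrite exchange_big /=.
under eq_bigr => b _ do under eq_bigr => a _ do under eq_bigr => l _ do
  under eq_bigr => i _ do rewrite exchange_big /=.
under eq_bigr => b _ do under eq_bigr => a _ do under eq_bigr => l _ do
  rewrite exchange_big /=.
under eq_bigr => b _ do under eq_bigr => a _ do under eq_bigr => l _ do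
  under eq_bigr => s _ do under eq_bigr => i _ do rewrite exchange_big /=.
under eq_bigr => b _ do under eq_bigr => a _ do under eq_bigr => l _ do
  under eq_bigr => s _ do rewrite exchange_big /=.
apply: sumr_ge0 => b _; apply: sumr_ge0 => a _; apply: sumr_ge0 => l _.
apply: le_trans (choi hmod (a0 := a) (b0 := b)
   (fun r => \sum_i (x a l (i, r))^* *: v i b)) _.
rewrite le_eqVlt; apply/orP; left; apply/eqP.
apply: eq_bigr => s _; apply: eq_bigr => r _.
rewrite qsum; apply: eq_bigr => i _; apply: eq_bigr => j _.
by rewrite conjCK.
Qed.

Theorem main_equiv : completely_positive Phi <-> positive_module_op (CPhi Phi).
Proof. split; [exact: CP_MOD | exact: MOD_CP]. Qed.

End Main.

Unset Implicit Arguments.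

Theorem proposition3p6 (C : numClosedFieldType)
  (p : nat) (n : 'I_p -> nat) (q : nat) (m : 'I_q -> nat)
  (Phi : Ialg C n -> Oalg C m) :
  is_linear_map Phi ->
  (completely_positive Phi <-> positive_module_op (CPhi Phi)).
Proof.
move=> h; exact: (main_equiv h).
Qed.
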